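(* Let $h^{-1}$ and $h_2^{-1}$ be as in the context. Then: (i) for $y>1+e$, $h^{-1}(y)\le 2\,\frac{y-1}{\log(y-1)}$; (ii) for $y>1+e$, $h_2^{-1}(y)\le 2\,\frac{y-1}{\log(y-1)}-1$; (iii) for $c>\sqrt2$ and $0\le y\le 9c^{-2}(c^2/2-1)^2$, $h_2^{-1}(y)\le c\sqrt y$; in particular with $c=2$ this holds for $0\le y\le 9/4$, and with $c=2.2$ it holds for $0\le y\le 1+e$; (iv) for $0<y<\infty$, $$h_2^{-1}(y)\le\begin{cases}2.2\sqrt y, & y\le 1+e,\\[2pt] 2\frac{y-1}{\log(y-1)}-1, & y>1+e.\end{cases}$$
   Context: $h(x)=x(\log x-1)+1$ restricted to $[1,\infty)$ is an increasing bijection onto $[0,\infty)$ with inverse $h^{-1}$; $h_2(x)=h(1+x)=(1+x)\log(1+x)-x$ is an increasing bijection of $[0,\infty)$ onto itself with inverse $h_2^{-1}$. *)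

(* Defs.v *)
From Stdlib Require Import Reals Lra ClassicalEpsilon.
Open Scope R_scope.

Definition h (x : R) : R := x * (ln x - 1) + 1.

Definition h2 (x : R) : R := (1 + x) * ln (1 + x) - x.

(* h^{-1} : [0,oo) -> [1,oo): the (unique, since h is an increasing
   bijection [1,oo) -> [0,oo)) x >= 1 with h x = y, chosen by epsilon. *)
Definition hinv (y : R) : R :=
  epsilon (inhabits 0) (fun x => 1 <= x /\ h x = y).

Definition h2inv (y : R) : R :=
  epsilon (inhabits 0) (fun x => 0 <= x /\ h2 x = y).

(* Main.v *)
Require Import Defs.
From Stdlib Require Import Reals.
From Stdlib Require Import Lra ClassicalEpsilon.
From Coquelicot Require Import Coquelicot.
Open Scope R_scope.

Lemma mono (f df : R -> R) a b : a <= b ->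
  (forall x, a <= x <= b -> is_derive f x (df x)) ->
  (forall x, a <= x <= b -> 0 <= df x) -> f a <= f b.
Proof.
  intros Hab Hd Hp. destruct (Req_dec a b) as [->|Hne]; [lra|].
  destruct (MVT_cor3 f df a b) as [c [H1 [H2 H3]]]; [lra| |].
  - intros x H1 H2. apply is_derive_Reals. apply Hd; lra.
  - rewrite H3. assert (0 <= df c) by (apply Hp; lra). nra.
Qed.

Lemma ln_le_sub1 x : 0 < x -> ln x <= x - 1.
Proof. intros Hx. pose proof (exp_ineq1_le (ln x)). rewrite exp_ln in H; lra. Qed.

Lemma F_ge t : 0 <= t -> 3*t*(6+t)/(2*(3+t)^2) <= ln (1+t).
Proof.
  intros Ht.
  assert (H := mono (fun t => ln (1+t) - 3*t*(6+t)/(2*(3+t)^2))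
     (fun t => 1/(1+t) - 27/(t+3)^3) 0 t Ht).
  simpl in H. rewrite Rplus_0_r, ln_1 in H.
  enough (0 <= ln (1 + t) - 3 * t * (6 + t) / (2 * ((3 + t) * ((3 + t) * 1)))) by (simpl; lra).
  match type of H with ?A -> ?B -> ?C <= _ => 
    replace C with 0 in H by (field; lra) end.
  apply H.
  - intros x Hx. auto_derive.
    + repeat split; nra.
    + field. lra.
  - intros x Hx. 
    assert (0 < 1 + x) by lra. assert (0 < (x+3)^3) by (apply pow_lt; lra).
    apply Rle_trans with (27/(x+3)^3 - 27/(x+3)^3); [lra|].
    apply Rplus_le_compat_r.
    replace (1/(1+x)) with (27/(27*(1+x))) by (field; lra).
    unfold Rdiv. apply Rmult_le_compat_l; [lra|]. apply Rinv_le_contravar; [lra|].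
    nra.
Qed.

Lemma bennett t : 0 <= t -> 3*t^2/(2*(3+t)) <= h2 t.
Proof.
  intros Ht.
  assert (H := mono (fun t => h2 t - 3*t^2/(2*(3+t)))
     (fun t => ln (1+t) - 3*t*(6+t)/(2*(3+t)^2)) 0 t Ht).
  unfold h2 in *. simpl in H. rewrite Rplus_0_r, ln_1 in H.
  match type of H with ?A -> ?B -> ?C <= _ => 
    replace C with 0 in H by (field; lra) end.
  enough (0 <= (1 + t) * ln (1 + t) - t - 3 * (t * (t * 1)) / (2 * (3 + t))) by (simpl; lra).
  apply H.
  - intros x Hx. auto_derive.
    + repeat split; nra.
    + field. lra.
  - intros x Hx. pose proof (F_ge x (proj1 Hx)). simpl in *. lra.
Qed.

Lemma exp_half : exp (-(1/2)) >= 29/48.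
Proof.
  assert (K1 : forall x, 0 <= x -> exp (-x) <= 1 - x + x^2/2).
  { intros x Hx.
    assert (H := mono (fun t => - exp (-t) + 1 - t + t^2/2) (fun t => exp (-t) - 1 + t) 0 x Hx).
    simpl in H. rewrite Ropp_0, exp_0 in H.
    enough (0 <= - exp (- x) + 1 - x + x * (x * 1) / 2) by (simpl; lra).
    match type of H with ?A -> ?B -> ?C <= _ => 
      replace C with 0 in H by (field; lra) end.
    apply H.
    - intros t Ht. auto_derive; [easy|field].
    - intros t Ht. pose proof (exp_ineq1_le (-t)). lra. }
  assert (H := mono (fun t => exp (-t) - 1 + t - t^2/2 + t^3/6) (fun t => - exp (-t) + 1 - t + t^2/2) 0 (1/2)).
  simpl in H. rewrite Ropp_0, exp_0 in H.
  match type of H with ?A -> ?B -> ?D -> ?C <= _ => 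
      replace C with 0 in H by (field; lra) end.
  assert (0 <= exp (- (1 / 2)) - 1 + 1 / 2 - 1 / 2 * (1 / 2 * 1) / 2 + 1 / 2 * (1 / 2 * (1 / 2 * 1)) / 6).
  { apply H; [lra| |].
    - intros t Ht. auto_derive; [easy|field].
    - intros t Ht. pose proof (K1 t (proj1 Ht)). lra. }
  lra.
Qed.

Lemma e_bound : exp 1 <= 2304/841.
Proof.
  pose proof exp_half.
  assert (exp 1 = / exp (-(1/2)) * / exp (-(1/2))).
  { rewrite <- !exp_Ropp, <- exp_plus. f_equal. lra. }
  rewrite H0.
  assert (/ exp (- (1/2)) <= 48/29).
  { replace (48/29) with (/ (29/48)) by field. apply Rinv_le_contravar; lra. }
  assert (0 < / exp (- (1/2))) by (apply Rinv_0_lt_compat, exp_pos).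
  nra.
Qed.

Lemma h_le a b : 1 <= a -> a <= b -> h a <= h b.
Proof.
  intros Ha Hab. unfold h.
  assert (Hl : ln (a/b) <= a/b - 1) by (apply ln_le_sub1; apply Rdiv_lt_0_compat; lra).
  rewrite ln_div in Hl by lra.
  assert (0 <= ln a) by (rewrite <- ln_1; apply ln_le; lra).
  assert (b * (ln a - ln b) <= a - b).
  { replace (a - b) with (b * (a/b - 1)) by (field; lra). apply Rmult_le_compat_l; lra. }
  nra.
Qed.

Lemma h_lt a b : 1 < a -> a < b -> h a < h b.
Proof.
  intros Ha Hab. unfold h.
  assert (Hl : ln (a/b) <= a/b - 1) by (apply ln_le_sub1; apply Rdiv_lt_0_compat; lra).
  rewrite ln_div in Hl by lra.
  assert (0 < ln a) by (rewrite <- ln_1; apply ln_increasing; lra).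
  assert (b * (ln a - ln b) <= a - b).
  { replace (a - b) with (b * (a/b - 1)) by (field; lra). apply Rmult_le_compat_l; lra. }
  nra.
Qed.

Lemma h_lt' a b : 1 <= a -> a < b -> h a < h b.
Proof.
  intros Ha Hab. apply Rle_lt_trans with (h ((a+b)/2)).
  - apply h_le; lra.
  - apply h_lt; lra.
Qed.

Lemma h_cont a : 1 <= a -> continuity_pt h a.
Proof.
  intros Ha. apply derivable_continuous_pt. exists (ln a + 0).
  apply is_derive_Reals. unfold h. auto_derive; [lra|]. field. lra.
Qed.

Lemma h_exists y : 0 <= y -> exists x, 1 <= x /\ h x = y.
Proof.
  intros Hy. destruct (Req_dec y 0) as [->|Hy0].
  { exists 1. split; [lra|]. unfold h. rewrite ln_1. ring. }
  set (X := exp 2 + y).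
  assert (HX : 1 < X) by (unfold X; pose proof (exp_ineq1_le 2); lra).
  assert (HlX : 2 <= ln X).
  { rewrite <- (ln_exp 2). apply ln_le; [apply exp_pos|]. unfold X; lra. }
  destruct (Ranalysis5.IVT_interv (fun x => h x - y) 1 X) as [z [Hz1 Hz2]].
  - intros a Ha. apply continuity_pt_minus; [apply h_cont; lra| apply continuity_pt_const; intros ? ?; reflexivity].
  - lra.
  - unfold h. rewrite ln_1. lra.
  - unfold h. assert (X * (ln X - 1) >= X) by nra.
    assert (0 < exp 2) by apply exp_pos. unfold X in *. lra.
  - exists z. split; lra.
Qed.

Lemma hinv_spec y : 0 <= y -> 1 <= hinv y /\ h (hinv y) = y.
Proof.
  intros Hy. unfold hinv. apply epsilon_spec. apply h_exists; assumption.
Qed.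

Lemma h2_h x : h2 x = h (1 + x).
Proof. unfold h2, h. ring. Qed.

Lemma h2inv_spec y : 0 <= y -> 0 <= h2inv y /\ h2 (h2inv y) = y.
Proof.
  intros Hy. unfold h2inv. apply epsilon_spec.
  destruct (h_exists y Hy) as [x [Hx1 Hx2]]. exists (x - 1). split; [lra|].
  rewrite h2_h. replace (1 + (x-1)) with x by ring. assumption.
Qed.

Lemma hB y : 1 + exp 1 < y -> 1 <= 2 * ((y - 1) / ln (y - 1)) /\ y <= h (2 * ((y - 1) / ln (y - 1))).
Proof.
  intros Hy. set (u := y - 1). set (L := ln u).
  assert (Hu : exp 1 < u) by (unfold u; lra).
  assert (He : 0 < exp 1) by apply exp_pos.
  assert (HL : 1 < L) by (unfold L; rewrite <- (ln_exp 1); apply ln_increasing; lra).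
  assert (HLu : L <= u - 1) by (apply ln_le_sub1; lra).
  assert (HL2 : ln (L/2) <= L/2 - 1) by (apply ln_le_sub1; lra).
  rewrite ln_div in HL2 by lra.
  assert (Hln2 : 0 < ln 2) by (rewrite <- ln_1; apply ln_increasing; lra).
  split.
  - apply Rmult_le_reg_r with L; [lra|]. unfold Rdiv. field_simplify; lra.
  - unfold h. replace (2 * (u / L)) with ((2 * u) / L) by (field; lra).
    rewrite ln_div by (try apply Rmult_lt_0_compat; lra). rewrite ln_mult by lra.
    fold L.
    replace (2 * u / L * (ln 2 + L - ln L - 1) + 1) with (u / L * (2 * (ln 2 + L - ln L - 1)) + 1) by (field; lra).
    assert (L <= 2 * (ln 2 + L - ln L - 1)) by lra.
    assert (0 < u / L) by (apply Rdiv_lt_0_compat; lra).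
    assert (u / L * L = u) by (field; lra).
    unfold u in *. nra.
Qed.

Lemma part1 y : 1 + exp 1 < y -> hinv y <= 2 * ((y - 1) / ln (y - 1)).
Proof.
  intros Hy. pose proof (exp_pos 1).
  destruct (hinv_spec y) as [H1 H2]; [lra|].
  destruct (hB y Hy) as [B1 B2].
  destruct (Rle_lt_dec (hinv y) (2 * ((y - 1) / ln (y - 1)))) as [|Hc]; [assumption|].
  pose proof (h_lt' _ _ B1 Hc). lra.
Qed.

Lemma part2 y : 1 + exp 1 < y -> h2inv y <= 2 * ((y - 1) / ln (y - 1)) - 1.
Proof.
  intros Hy. pose proof (exp_pos 1).
  destruct (h2inv_spec y) as [H1 H2]; [lra|].
  destruct (hB y Hy) as [B1 B2].
  rewrite h2_h in H2.
  destruct (Rle_lt_dec (h2inv y) (2 * ((y - 1) / ln (y - 1)) - 1)) as [|Hc]; [assumption|].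
  assert (Hc' : 2 * ((y - 1) / ln (y - 1)) < 1 + h2inv y) by lra.
  pose proof (h_lt' _ _ B1 Hc'). lra.
Qed.

Lemma part3 c y : sqrt 2 < c -> 0 <= y ->
     y <= 9 * / (c ^ 2) * (c ^ 2 / 2 - 1) ^ 2 -> h2inv y <= c * sqrt y.
Proof.
  intros Hc Hy Hyb.
  assert (Hs2 : 0 <= sqrt 2) by apply sqrt_pos.
  assert (Hc2 : 2 < c^2).
  { rewrite <- (sqrt_sqrt 2) by lra. simpl. nra. }
  assert (Hc0 : 0 < c) by lra.
  set (s := sqrt y).
  assert (Hs : 0 <= s) by apply sqrt_pos.
  assert (Hss : s * s = y) by (apply sqrt_sqrt; lra).
  set (K := 3 * (c^2/2 - 1) / c).
  assert (HK : 0 <= K) by (unfold K; apply Rmult_le_pos; [lra| left; apply Rinv_0_lt_compat; lra]).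
  assert (HsK : s <= K).
  { assert (y <= K * K) by (unfold K; replace (3 * (c ^ 2 / 2 - 1) / c * (3 * (c ^ 2 / 2 - 1) / c)) with
       (9 * / (c ^ 2) * (c ^ 2 / 2 - 1) ^ 2) by (field; lra); lra).
    destruct (Rle_lt_dec s K); [assumption|]. nra. }
  set (t := c * s).
  assert (Ht0 : 0 <= t) by (unfold t; nra).
  assert (Ht : t <= 3 * (c^2/2 - 1)).
  { unfold t. replace (3 * (c^2/2 - 1)) with (c * K) by (unfold K; field; lra). nra. }
  assert (Hb := bennett t Ht0).
  assert (Hy2 : y <= h2 t).
  { eapply Rle_trans; [|exact Hb].
    assert (3 * t ^ 2 / (2 * (3 + t)) = t^2 * (3 / (2 * (3+t)))) by (field; lra).
    rewrite H.
    assert (/ c^2 <= 3 / (2 * (3+t))).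
    { replace (3 / (2 * (3+t))) with (/ (2 * (3 + t) / 3)) by (field; lra).
      apply Rinv_le_contravar; lra. }
    assert (y = t^2 * / c^2) by (unfold t; rewrite <- Hss; field; lra).
    rewrite H1. apply Rmult_le_compat_l; [nra|assumption]. }
  destruct (h2inv_spec y Hy) as [H1 H2].
  destruct (Rle_lt_dec (h2inv y) t) as [|Hc']; [assumption|].
  rewrite !h2_h in *.
  assert (1 + t < 1 + h2inv y) by lra.
  assert (1 <= 1 + t) by lra. pose proof (h_lt' _ _ H0 H). lra.
Qed.

Lemma sqrt2_lt c : 2 <= c -> sqrt 2 < c.
Proof.
  intros Hc. apply Rlt_le_trans with 2; [|assumption].
  rewrite <- (sqrt_square 2) at 2 by lra. apply sqrt_lt_1; lra.
Qed.

Lemma part3b y : 0 <= y -> y <= 9 / 4 -> h2inv y <= 2 * sqrt y.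
Proof.
  intros. apply part3; [apply sqrt2_lt; lra|assumption|]. simpl. 
  replace (9 * / (2 * (2 * 1)) * ((2 * (2 * 1) / 2 - 1) * ((2 * (2 * 1) / 2 - 1) * 1))) with (9/4) by field. assumption.
Qed.

Lemma part3c y : 0 <= y -> y <= 1 + exp 1 -> h2inv y <= 22 / 10 * sqrt y.
Proof.
  intros. apply part3; [apply sqrt2_lt; lra|assumption|]. pose proof e_bound.
  replace (9 * / ((22/10)^2) * ((22/10)^2/2 - 1)^2) with (9 * 5041 / 12100) by field. lra.
Qed.

Theorem lemma15 :
  (* (i) *)
  (forall y : R, 1 + exp 1 < y -> hinv y <= 2 * ((y - 1) / ln (y - 1))) /\
  (* (ii) *)
  (forall y : R, 1 + exp 1 < y -> h2inv y <= 2 * ((y - 1) / ln (y - 1)) - 1) /\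
  (* (iii) general c *)
  (forall c y : R, sqrt 2 < c -> 0 <= y ->
     y <= 9 * / (c ^ 2) * (c ^ 2 / 2 - 1) ^ 2 -> h2inv y <= c * sqrt y) /\
  (* (iii) c = 2 *)
  (forall y : R, 0 <= y -> y <= 9 / 4 -> h2inv y <= 2 * sqrt y) /\
  (* (iii) c = 2.2 *)
  (forall y : R, 0 <= y -> y <= 1 + exp 1 -> h2inv y <= 22 / 10 * sqrt y) /\
  (* (iv) *)
  (forall y : R, 0 < y ->
     (y <= 1 + exp 1 -> h2inv y <= 22 / 10 * sqrt y) /\
     (1 + exp 1 < y -> h2inv y <= 2 * ((y - 1) / ln (y - 1)) - 1)).
Proof.
  split; [exact part1|]. split; [exact part2|]. split; [exact part3|].
  split; [exact part3b|]. split; [exact part3c|].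
  intros y Hy. split; [apply part3c; lra| apply part2].
Qed.
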